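(* Fix $\lambda\in\mathbb R$. Almost surely, for all $x\ge y\ge0$, $$\mathcal S(y_b,\lambda+x)=\sup_{i\in\mathbb N}\Big\{Z^{\lambda,b}_i(y)+\mathcal P[(\lambda+y,i)\to(\lambda+x,1)]\Big\},$$ and the supremum is attained at a finite index.
   Context: Last passage percolation (LPP): for a sequence $f=(f_1,f_2,\dots)$ of continuous functions on $\mathbb R$, $y\le x$ and $n\ge m$, an up-right path $\gamma$ from $(y,n)$ to $(x,m)$ is specified by jump times $y=t_{n+1}\le t_n\le\dots\le t_{m+1}\le t_m=x$; its weight is $f[\gamma]=\sum_{i=m}^n(f_i(t_i)-f_i(t_{i+1}))$, and $f[(y,n)\to(x,m)]=\sup_\gamma f[\gamma]$. The parabolic Airy line ensemble $\mathcal P=(\mathcal P_1,\mathcal P_2,\dots)$ is the random collection of continuous non-intersecting curves $\mathcal P_1>\mathcal P_2>\cdots$ on $\mathbb R$ such that for all $m$ and $t_1<\dots<t_m$ the point process $\{(\mathcal P_i(t_j)+t_j^2,t_j)\}$ is determinantal with the extended Airy kernel $K((x,t);(y,s))=\int_0^\infty e^{-u(t-s)}\mathrm{Ai}(x+u)\mathrm{Ai}(y+u)\,du$ for $t\ge s$ and $-\int_{-\infty}^0 e^{-u(t-s)}\mathrm{Ai}(x+u)\mathrm{Ai}(y+u)\,du$ for $t<s$. The parabolic Airy sheet $\mathcal S:\mathbb R^2\to\mathbb R$ is the continuous random process (unique in law) such that (i) $\mathcal S(\cdot+z,\cdot+z)\overset{d}{=}\mathcal S$ for every $z$, and (ii)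 $\mathcal S$ can be coupled with $\mathcal P$ so that $\mathcal S(0,\cdot)=\mathcal P_1$ and, a.s., for all rational $x,y,z$ with $y>0$ there is a random $K$ with $\mathcal S(y,z)-\mathcal S(y,x)=\mathcal P[(y)_k\to(z,1)]-\mathcal P[(y)_k\to(x,1)]$ for $k\ge K$, where $(y)_k=(-(k/(2y))^{1/2},k)$. We work with $\mathcal S$ and $\mathcal P$ coupled in this way, and fix $y_b>0$. Notation: $\mathcal P^\lambda_{j\to i}(x)=\mathcal P[(\lambda,j)\to(\lambda+x,i)]$ for $j\ge i$, $x\ge0$. Boundary data: for $\lambda\in\mathbb R$, $y>0$, $i\in\mathbb N$, $b^{\lambda,y}_i=\lim_{k\to\infty}\big(\mathcal P[(y)_k\to(\lambda,i)]-\mathcal P[(y)_k\to(\lambda,1)]+\mathcal S(y,\lambda)\big)$. It is known that for fixed $\lambda,y$ these limits exist and are finite a.s., and that a.s. for all $x\ge0$, $\mathcal S(y,\lambda+x)=\sup_{i\in\mathbb N}\{b^{\lambda,y}_i+\mathcal P^\lambda_{i\to1}(x)\}$ with the supremum attained at a finite index. Write $b^\lambda_i=b^{\lambda,y_b}_i$, and define the boundary data process $Z^{\lambda,b}_i(x)=\sup_{j\ge i}\{b^\lambda_j+\mathcal P^\lambda_{j\to i}(x)\}$ for $x\ge0$, $i\in\mathbb N$. *)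

(* Defs.v *)
From HB Require Import structures.
From mathcomp Require Import all_boot all_order all_algebra.
From mathcomp Require Import all_classical all_reals all_analysis.
Set Implicit Arguments. Unset Strict Implicit. Unset Printing Implicit Defensive.
Import Order.TTheory GRing.Theory Num.Theory.
Import numFieldNormedType.Exports.
Local Open Scope classical_set_scope.
Local Open Scope ring_scope.

Section AiryDefs.
Variable R : realType.

(* A sequence of functions f = (f_1, f_2, ...) is modelled as f : nat -> R -> R;
   only the indices i >= 1 are ever used.  An up-right path from (y,n) to (x,m)
   (m <= n) is given by jump times t : nat -> R with t (n+1) = y, t m = x and
   t (i+1) <= t i for m <= i <= n (only these values of t matter). *)
Definition lpp_path (m n : nat) (y x : R) : set (nat -> R) :=
  [set t | (m <= n)%N /\ t n.+1 = y /\ t m = x /\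
           (forall i, (m <= i <= n)%N -> t i.+1 <= t i)].

Definition lpp_weight (f : nat -> R -> R) (m n : nat) (t : nat -> R) : R :=
  \sum_(m <= i < n.+1) (f i (t i) - f i (t i.+1)).

Definition lpp (f : nat -> R -> R) (p q : R * nat) : R :=
  sup [set w | exists2 t, lpp_path q.2 p.2 p.1 q.1 t & w = lpp_weight f q.2 p.2 t].

Definition lppP (f : nat -> R -> R) (lam : R) (j i : nat) (x : R) : R :=
  lpp f (lam, j) (lam + x, i).

Definition ypt (y : R) (k : nat) : R * nat := (- Num.sqrt (k%:R / (2 * y)), k).

(* Ai is characterized as the solution of Ai'' = x Ai that tends to 0 at +oo
   and satisfies \int_0^oo Ai = 1/3 (this determines Ai uniquely). *)
Definition is_Airy_Ai (Ai : R -> R) : Prop :=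
  [/\ (forall x, derivable Ai x 1),
      (forall x, derivable (derive1 Ai) x 1),
      (forall x, derive1 (derive1 Ai) x = x * Ai x),
      Ai x @[x --> +oo] --> 0 &
      (\int[lebesgue_measure]_(x in `[0%R, +oo[) (Ai x)%:E = (3^-1 : R)%:E)%E].

Definition airy_kernel (Ai : R -> R) (p q : R * R) : R :=
  let: (x, t) := p in let: (y, s) := q in
  if s <= t then
    Rintegral lebesgue_measure `[0, +oo[
      (fun u => expR (- u * (t - s)) * Ai (x + u) * Ai (y + u))
  else
    - Rintegral lebesgue_measure `]-oo, 0]
      (fun u => expR (- u * (t - s)) * Ai (x + u) * Ai (y + u)).

Fixpoint box_integral (cs ds : seq R) (F : seq R -> R) : R :=
  match cs, ds with
  | c :: cs', d :: ds' =>
      Rintegral lebesgue_measure `]c, d]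
        (fun x => box_integral cs' ds' (fun xs => F (x :: xs)))
  | _, _ => F [::]
  end.

(* The determinantal property: for all times t_1 < ... < t_m, the point process
   {(P_i(t_j) + t_j^2, t_j)} (i >= 1) on R x {t_1..t_m} has n-point correlation
   functions det[K(z_a, z_b)] w.r.t. Lebesgue x counting measure; stated via
   factorial moments on products of boxes ]c_a,d_a] x {t_(jj a)}. *)
Definition airy_det_property (d : measure_display) (T : measurableType d)
    (Pr : probability T R) (Ai : R -> R) (P : T -> nat -> R -> R) : Prop :=
  forall (m : nat) (t : 'I_m -> R), {homo t : a b / (a < b)%O >-> a < b} ->
  forall (n : nat) (jj : 'I_n -> 'I_m) (c e : 'I_n -> R),
    (\int[Pr]_w
       (\esum_(iota in [set iota : {ffun 'I_n -> nat} |
            (forall a, (1 <= iota a)%N) /\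
            (forall a b, a <> b -> (iota a, jj a) <> (iota b, jj b)) /\
            (forall a, (P w (iota a) (t (jj a)) + t (jj a) ^+ 2)%R \in `]c a, e a])])
          1)%E
     = (box_integral [seq c a | a <- enum 'I_n] [seq e a | a <- enum 'I_n]
          (fun xs => \det (\matrix_(a, b)
              airy_kernel Ai (nth 0 xs a, t (jj a)) (nth 0 xs b, t (jj b)))))%:E)%E.

Definition is_parabolic_Airy_line_ensemble (d : measure_display)
    (T : measurableType d) (Pr : probability T R) (Ai : R -> R)
    (P : T -> nat -> R -> R) : Prop :=
  [/\ (forall i t, measurable_fun setT (fun w => P w i t)),
      (forall w i, (1 <= i)%N -> continuous (P w i)),
      (forall w i t, (1 <= i)%N -> P w i.+1 t < P w i t) &
      airy_det_property Pr Ai P].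

Definition is_Airy_sheet_coupled (d : measure_display) (T : measurableType d)
    (Pr : probability T R) (P : T -> nat -> R -> R) (S : T -> R -> R -> R) : Prop :=
  [/\ (forall u v, measurable_fun setT (fun w => S w u v)),
      (forall w, continuous (fun p : R * R => S w p.1 p.2)),
      (* (i) S(. + z, . + z) has the same law as S (finite-dim. distributions) *)
      (forall (z : R) (n : nat) (u v c e : 'I_n -> R),
         Pr [set w | forall a, S w (u a + z) (v a + z) \in `]c a, e a]]
         = Pr [set w | forall a, S w (u a) (v a) \in `]c a, e a]]),
      {ae Pr, forall w, forall x, S w 0 x = P w 1%N x} &
      {ae Pr, forall w, forall x y z : rat, 0 < y ->
         exists K : nat, forall k : nat, (K < k)%N ->
           S w (ratr y) (ratr z) - S w (ratr y) (ratr x)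
           = lpp (P w) (ypt (ratr y) k) (ratr z, 1%N)
             - lpp (P w) (ypt (ratr y) k) (ratr x, 1%N)}].

Definition airy_bseq (T : Type) (P : T -> nat -> R -> R) (S : T -> R -> R -> R)
    (lam y : R) (w : T) (i : nat) : nat -> R :=
  fun k => lpp (P w) (ypt y k) (lam, i) - lpp (P w) (ypt y k) (lam, 1%N) + S w y lam.

Definition bdata (T : Type) (P : T -> nat -> R -> R) (S : T -> R -> R -> R)
    (lam y : R) (w : T) (i : nat) : R :=
  limn (airy_bseq P S lam y w i).

Definition Zbd (T : Type) (P : T -> nat -> R -> R) (S : T -> R -> R -> R)
    (lam yb : R) (w : T) (i : nat) (x : R) : \bar R :=
  ereal_sup [set (bdata P S lam yb w j + lppP (P w) lam j i x)%:E
            | j in [set j : nat | (i <= j)%N]].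

End AiryDefs.

(* Main.v *)
Require Import Defs.
From HB Require Import structures.
From mathcomp Require Import all_boot all_order all_algebra.
From mathcomp Require Import all_classical all_reals all_analysis.
From mathcomp Require Import lra zify.
Import Order.TTheory GRing.Theory Num.Theory.
Import numFieldNormedType.Exports.
Local Open Scope classical_set_scope.
Local Open Scope ring_scope.

Section Det.
Local Set Implicit Arguments. Local Unset Strict Implicit.
Variable R : realType.
Implicit Types (f : nat -> R -> R) (t : nat -> R).

Lemma path_mono m n a b t : lpp_path m n a b t ->
  forall i k, (m <= i)%N -> (i <= k)%N -> (k <= n.+1)%N -> t k <= t i.
Proof.
move=> [_ [_ [_ Hm]]] i k mi; elim: k => [|k IH] ik kn.
  by have -> : i = 0%N by lia.
have [->|ik'] := eqVneq i k.+1; first by [].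
apply: (le_trans _ (IH _ _)); [apply: Hm|..]; lia.
Qed.

Lemma path_range m n a b t : lpp_path m n a b t ->
  forall k, (m <= k <= n.+1)%N -> a <= t k <= b.
Proof.
move=> Hp k /andP[mk kn]; have := Hp => -[mn [ta [tb _]]].
rewrite -ta -tb; apply/andP; split.
- apply: (path_mono (i:=k) (k:=n.+1) Hp); lia.
- apply: (path_mono (i:=m) (k:=k) Hp); lia.
Qed.

Lemma path_exists m n (a b : R) : (m <= n)%N -> a <= b -> lpp_path m n a b
   (fun k => if (k <= m)%N then b else a).
Proof.
move=> mn ab; split => //; split; first by case: ifPn => //; lia.
split; first by rewrite leqnn.
move=> i /andP[mi _]; case: ifPn => H1; case: ifPn => H2 //; lia.
Qed.


Lemma cont_bound (g : R -> R) (a b : R) : continuous g ->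
  exists C, forall z, a <= z <= b -> `|g z| <= C.
Proof.
move=> cg; have [ab|ba] := leP a b; last first.
  by exists 0 => z /andP[az zb]; exfalso; lra.
have cw : {within `[a, b], continuous g} by exact: continuous_subspaceT.
have [c1 _ H1] := EVT_max ab cw; have [c2 _ H2] := EVT_min ab cw.
exists (`|g c1| + `|g c2|) => z azb.
have zi : z \in `[a, b] by rewrite in_itv /=.
have := H1 _ zi; have := H2 _ zi.
have := ler_norm (g c1); have := ler_norm (- g c2); rewrite normrN.
have := normr_ge0 (g c1); have := normr_ge0 (g c2).
rewrite ler_norml => ? ? ? ? ? ?; apply/andP; split; lra.
Qed.

Lemma fam_bound f m (a b : R) : (forall k, (m <= k)%N -> continuous (f k)) ->
  forall n, exists C, forall k, (m <= k <= n)%N -> forall z, a <= z <= b -> `|f k z| <= C.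
Proof.
move=> cf; elim => [|n [C HC]].
  have [m0|m0] := eqVneq m 0%N.
    have [C HC] := cont_bound a b (cf 0%N (eq_leq m0)).
    by exists C => k km; have -> : k = 0%N by lia.
  by exists 0 => k km; exfalso; lia.
have [mn|mn] := leqP m n.+1.
  have [C1 HC1] := cont_bound a b (cf _ mn).
  exists (Num.max C C1) => k /andP[mk kn] z zab; rewrite le_max.
  have [->|kn'] := eqVneq k n.+1; first by rewrite HC1 ?orbT.
  by rewrite HC //; apply/andP; split => //; lia.
by exists C => k /andP[mk kn]; apply: HC; apply/andP; split => //; lia.
Qed.

Definition Wset f m n (a b : R) : set R :=
  [set w | exists2 t, lpp_path m n a b t & w = lpp_weight f m n t].

Lemma lppE f (a b : R) n m : lpp f (a, n) (b, m) = sup (Wset f m n a b).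
Proof. by []. Qed.

Lemma Wset_ub f m n (a b : R) : (forall k, (m <= k)%N -> continuous (f k)) ->
  has_ubound (Wset f m n a b).
Proof.
move=> cf; have [C HC] := fam_bound a b cf n.
exists ((C + C) *+ (n.+1 - m)) => w [t Ht ->].
rewrite /lpp_weight -sumr_const_nat; apply: ler_sum_nat => i /andP[mi iS].
have r1 := path_range Ht (k:=i); have r2 := path_range Ht (k:=i.+1).
have h1 := HC i ltac:(apply/andP; split; lia) (t i) (r1 ltac:(apply/andP; split; lia)).
have h2 := HC i ltac:(apply/andP; split; lia) (t i.+1) (r2 ltac:(apply/andP; split; lia)).
have := ler_norm (f i (t i)); have := ler_norm (- f i (t i.+1)); rewrite normrN.
lra.
Qed.

Lemma Wset_n0 f m n (a b : R) : (m <= n)%N -> a <= b -> Wset f m n a b !=set0.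
Proof. by move=> mn ab; eexists; exists (fun k => if (k <= m)%N then b else a); first exact: path_exists. Qed.

Lemma Wset_sup f m n (a b : R) : (forall k, (m <= k)%N -> continuous (f k)) ->
  (m <= n)%N -> a <= b -> has_sup (Wset f m n a b).
Proof. by move=> cf mn ab; split; [exact: Wset_n0|exact: Wset_ub]. Qed.

Lemma find_cross m n (a b c : R) t : lpp_path m n a b t -> a <= c <= b ->
  exists i, (m <= i <= n)%N /\ t i.+1 <= c <= t i.
Proof.
move=> Hp /andP[ac cb]; have := Hp => -[mn [ta [tb Hm]]].
suff H : forall d k, (k + d = n)%N -> (m <= k)%N -> c <= t k ->
   exists i, (k <= i <= n)%N /\ t i.+1 <= c <= t i.
  have [i [? ?]] := H (n - m)%N m ltac:(lia) (leqnn _) ltac:(by rewrite tb).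
  by exists i; split => //; lia.
elim => [|d IH] k kd mk ck.
  have kn : k = n by lia.
  by exists k; rewrite ck andbT kn ta ac; split => //; lia.
have [tk|tk] := leP (t k.+1) c.
  by exists k; split; [lia|rewrite tk ck].
have [i [? ?]] := IH k.+1 ltac:(lia) ltac:(lia) (ltW tk).
by exists i; split => //; lia.
Qed.

Lemma find_max (g : nat -> R) m j : (m <= j)%N ->
  exists i, (m <= i <= j)%N /\ forall k, (m <= k <= j)%N -> g k <= g i.
Proof.
elim: j => [|j IH] mj.
  have m0 : m = 0%N by lia.
  exists 0%N; split => [|k km]; first by rewrite m0.
  by have -> : k = 0%N by lia.
have [mj'|mj'] := leqP m j.
  have [i [ii Hi]] := IH mj'.
  have [gi|gi] := leP (g j.+1) (g i).
    exists i; split; first lia.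
    move=> k km; have [->|kn] := eqVneq k j.+1 => //.
    by apply: Hi; lia.
  exists j.+1; split; first lia.
  move=> k km; have [->|kn] := eqVneq k j.+1 => //.
  by apply: le_trans (Hi _ _) (ltW gi); lia.
have -> : m = j.+1 by lia.
exists j.+1; split; first lia.
by move=> k km; have -> : k = j.+1 by lia.
Qed.

Lemma weight_split f m i j t : (m <= i <= j)%N ->
  lpp_weight f m j t = \sum_(m <= k < i) (f k (t k) - f k (t k.+1))
    + (f i (t i) - f i (t i.+1)) + \sum_(i.+1 <= k < j.+1) (f k (t k) - f k (t k.+1)).
Proof.
move=> /andP[mi ij]; rewrite /lpp_weight (big_cat_nat _ (n:=i)) //=; last lia.
by rewrite (big_ltn (m:=i)) ?addrA //; lia.
Qed.


Lemma concat_path m i j (a c b : R) t1 t2 : (m <= i <= j)%N ->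
  lpp_path i j a c t1 -> lpp_path m i c b t2 ->
  let t := fun k => if (k <= i)%N then t2 k else t1 k in
  lpp_path m j a b t /\
  forall f, lpp_weight f m j t = lpp_weight f i j t1 + lpp_weight f m i t2.
Proof.
move=> /andP[mi ij] H1 H2 t; have := H1 => -[_ [a1 [c1 M1]]]; have := H2 => -[_ [c2 [b2 M2]]].
split.
  split; first lia.
  split; first by rewrite /t ifF ?a1 //; lia.
  split; first by rewrite /t ifT ?b2 //.
  move=> k /andP[mk kj]; rewrite /t.
  have [ki|ki] := ltnP k i.
    try (have -> : (k <= i)%N = true by lia).
    try (have -> : (k.+1 <= i)%N = true by lia).
    apply: M2; lia.
  have [ek|ek] := eqVneq k i.
    rewrite ek leqnn.
    apply: (le_trans (M1 i _)); first lia.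
    by rewrite c1 -c2; apply: M2; lia.
  try (have -> : (k <= i)%N = false by lia).
  try (have -> : (k.+1 <= i)%N = false by lia).
  apply: M1; lia.
move=> f.
rewrite (@weight_split f m i j t); last by rewrite mi ij.
rewrite (@weight_split f i i j t1); last by rewrite leqnn ij.
rewrite (@weight_split f m i i t2); last by rewrite mi leqnn.
rewrite (big_geq (leqnn i)) (big_geq (leqnn i.+1)).
rewrite c1 c2 /t leqnn ifF; last lia.
rewrite (eq_big_nat _ _ (F1 := fun k => f k (if (k <= i)%N then t2 k else t1 k) -
      f k (if (k.+1 <= i)%N then t2 k.+1 else t1 k.+1)) (F2 := fun k => f k (t2 k) - f k (t2 k.+1)) (m:=m) (n:=i)); last first.
  move=> k /andP[_ ki].
  have -> : (k <= i)%N = true by lia.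
  by have -> : (k.+1 <= i)%N = true by lia.
rewrite (eq_big_nat _ _ (F1 := fun k => f k (if (k <= i)%N then t2 k else t1 k) -
      f k (if (k.+1 <= i)%N then t2 k.+1 else t1 k.+1)) (F2 := fun k => f k (t1 k) - f k (t1 k.+1)) (m:=i.+1) (n:=j.+1)); last first.
  move=> k /andP[ik _].
  have -> : (k <= i)%N = false by lia.
  by have -> : (k.+1 <= i)%N = false by lia.
rewrite addr0 add0r; lra.
Qed.


Lemma neqSn (i : nat) : (i.+1 == i) = false.
Proof. by apply/negbTE; lia. Qed.
Lemma neqnS (i : nat) : (i == i.+1) = false.
Proof. by apply/negbTE; lia. Qed.

Lemma split_path m i j (a c b : R) t : (m <= i <= j)%N ->
  lpp_path m j a b t -> t i.+1 <= c <= t i ->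
  let t1 := fun k => if k == i then c else t k in
  let t2 := fun k => if k == i.+1 then c else t k in
  [/\ lpp_path i j a c t1, lpp_path m i c b t2 &
  forall f, lpp_weight f m j t = lpp_weight f i j t1 + lpp_weight f m i t2].
Proof.
move=> /andP[mi ij] Hp /andP[tc ct] t1 t2; have := Hp => -[_ [ta [tb M]]].
split.
- split => //; split; first by rewrite /t1 ifF ?ta //; apply/negbTE; lia.
  split; first by rewrite /t1 eqxx.
  move=> k /andP[ik kj]; rewrite /t1.
  have [ek|ek] := eqVneq k i; first by subst k; rewrite ?eqxx ?neqSn.
  rewrite ifF; last by apply/negbTE; lia.
  apply: M; lia.
- split => //; split; first by rewrite /t2 eqxx.
  split; first by rewrite /t2 ifF ?tb //; apply/negbTE; lia.
  move=> k /andP[mk ki]; rewrite /t2.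
  have [ek|ek] := eqVneq k i.
    by subst k; rewrite ?eqxx ?neqnS.
  rewrite ifF; last by apply/negbTE; lia.
  rewrite ifF; last by apply/negbTE; lia.
  apply: M; lia.
move=> f.
rewrite (@weight_split f m i j t); last by rewrite mi ij.
rewrite (@weight_split f i i j t1); last by rewrite leqnn ij.
rewrite (@weight_split f m i i t2); last by rewrite mi leqnn.
rewrite (big_geq (leqnn i)) (big_geq (leqnn i.+1)).
rewrite /t1 /t2 eqxx neqSn neqnS.
rewrite (eq_big_nat _ _ (F1 := fun k => f k (if k == i then c else t k) -
      f k (if k.+1 == i then c else t k.+1)) (F2 := fun k => f k (t k) - f k (t k.+1)) (m:=i.+1) (n:=j.+1)); last first.
  move=> k /andP[ik _]; rewrite ifF; last by apply/negbTE; lia.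
  by rewrite ifF //; apply/negbTE; lia.
rewrite (eq_big_nat _ _ (F1 := fun k => f k (if k == i.+1 then c else t k) -
      f k (if k.+1 == i.+1 then c else t k.+1)) (F2 := fun k => f k (t k) - f k (t k.+1)) (m:=m) (n:=i)); last first.
  move=> k /andP[_ ki]; rewrite ifF; last by apply/negbTE; lia.
  by rewrite ifF //; apply/negbTE; lia.
rewrite eqxx addr0 add0r; lra.
Qed.


Lemma lpp_concat f m i j (a c b : R) : (forall k, (m <= k)%N -> continuous (f k)) ->
  (m <= i <= j)%N -> a <= c <= b ->
  lpp f (a, j) (c, i) + lpp f (c, i) (b, m) <= lpp f (a, j) (b, m).
Proof.
move=> cf /andP[mi ij] /andP[ac cb]; rewrite !lppE.
have cfi : forall k, (i <= k)%N -> continuous (f k) by move=> k ik; apply: cf; lia.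
have HN : has_sup (Wset f m j a b) by apply: Wset_sup => //; [lia|lra].
have key : forall w1 w2, Wset f i j a c w1 -> Wset f m i c b w2 ->
    w1 + w2 <= sup (Wset f m j a b).
  move=> _ _ [t1 H1 ->] [t2 H2 ->].
  have [Hp Hw] := concat_path (ltac:(by rewrite mi ij) : (m <= i <= j)%N) H1 H2.
  apply: sup_upper_bound => //; eexists; first exact: Hp.
  by rewrite Hw.
have HM : Wset f m i c b !=set0 by apply: Wset_n0.
have HL : Wset f i j a c !=set0 by apply: Wset_n0.
suff : sup (Wset f m i c b) <= sup (Wset f m j a b) - sup (Wset f i j a c) by lra.
apply: ge_sup => // w2 Hw2.
suff : sup (Wset f i j a c) <= sup (Wset f m j a b) - w2 by lra.
apply: ge_sup => // w1 Hw1.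
have := key _ _ Hw1 Hw2; lra.
Qed.

Lemma lpp_split f m j (a c b : R) : (forall k, (m <= k)%N -> continuous (f k)) ->
  (m <= j)%N -> a <= c <= b ->
  exists i, (m <= i <= j)%N /\
    lpp f (a, j) (b, m) <= lpp f (a, j) (c, i) + lpp f (c, i) (b, m).
Proof.
move=> cf mj /andP[ac cb].
have [i0 [Hi0 Hmax]] := find_max (fun i => lpp f (a, j) (c, i) + lpp f (c, i) (b, m)) mj.
exists i0; split => //.
rewrite [X in X <= _]lppE; apply: ge_sup; first by apply: Wset_n0 => //; lra.
move=> _ [t Ht ->].
have [i [Hi Hc]] := find_cross Ht (ltac:(by rewrite ac cb) : a <= c <= b).
have [H1 H2 Hw] := split_path Hi Ht Hc.
apply: le_trans (Hmax i Hi); rewrite Hw.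
move: Hi => /andP[mi ij].
have cfi : forall k, (i <= k)%N -> continuous (f k) by move=> k ik; apply: cf; lia.
apply: lerD; rewrite lppE; apply: sup_upper_bound.
- by apply: Wset_sup.
- by eexists; first exact: H1.
- by apply: Wset_sup.
- by eexists; first exact: H2.
Qed.

End Det.

Theorem lemma2p7 (R : realType) (d : measure_display) (T : measurableType d)
  (Pr : probability T R) (Ai : R -> R)
  (P : T -> nat -> R -> R) (S : T -> R -> R -> R) (yb lam : R) :
  is_Airy_Ai Ai ->
  is_parabolic_Airy_line_ensemble Pr Ai P ->
  is_Airy_sheet_coupled Pr P S ->
  0 < yb ->
  (* known facts (context): for fixed lam', y > 0, a.s. the limits b^{lam',y}_i
     exist and are finite ... *)
  (forall lam' y : R, 0 < y ->
     {ae Pr, forall w, forall i : nat, (1 <= i)%N -> cvgn (airy_bseq P S lam' y w i)}) ->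
  (* ... and a.s. for all x >= 0, S(y, lam'+x) = sup_i {b_i + P^lam'_{i->1}(x)},
     the supremum being attained at a finite index *)
  (forall lam' y : R, 0 < y ->
     {ae Pr, forall w, forall x : R, 0 <= x ->
        exists2 i : nat, (1 <= i)%N &
          S w y (lam' + x) = bdata P S lam' y w i + lppP (P w) lam' i 1 x /\
          (forall j : nat, (1 <= j)%N ->
             bdata P S lam' y w j + lppP (P w) lam' j 1 x <= S w y (lam' + x))}) ->
  {ae Pr, forall w, forall x y : R, 0 <= y -> y <= x ->
     exists2 i : nat, (1 <= i)%N &
       ((S w yb (lam + x))%:E
          = Zbd P S lam yb w i y + (lpp (P w) (lam + y, i) (lam + x, 1%N))%:E /\
        (forall j : nat, (1 <= j)%N ->
           Zbd P S lam yb w j y + (lpp (P w) (lam + y, j) (lam + x, 1%N))%:E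
             <= (S w yb (lam + x))%:E))%E}.
Proof.
move=> _ [_ cP _ _] _ yb0 _ Hsup.
apply: filterS (Hsup lam yb yb0) => w Hw x y y0 yx.
have x0 : 0 <= x by lra.
have [i0 i0p [Seq Sle]] := Hw x x0.
have cf : forall k, (1 <= k)%N -> continuous (P w k) by move=> k k1; exact: cP.
have lamy : lam <= lam + y <= lam + x by apply/andP; split; lra.
have [i [/andP[i1 ii0] Hle]] := lpp_split cf i0p lamy.
have conc : forall j k, (1 <= k <= j)%N ->
   lpp (P w) (lam, j) (lam + y, k) + lpp (P w) (lam + y, k) (lam + x, 1%N)
   <= lpp (P w) (lam, j) (lam + x, 1%N).
  move=> j k kj; apply: lpp_concat => //; apply/andP; split; lra.
have ub : forall k, (1 <= k)%N ->
   (Zbd P S lam yb w k y + (lpp (P w) (lam + y, k) (lam + x, 1%N))%:E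
      <= (S w yb (lam + x))%:E)%E.
  move=> k k1.
  have -> : S w yb (lam + x) = (S w yb (lam + x) - lpp (P w) (lam + y, k) (lam + x, 1%N))
        + lpp (P w) (lam + y, k) (lam + x, 1%N) by rewrite subrK.
  rewrite EFinD; apply: leeD2r; apply: ge_ereal_sup => _ [j /= kj <-].
  rewrite lee_fin.
  have := Sle j ltac:(lia); have := conc j k ltac:(by rewrite k1 kj).
  rewrite /lppP; lra.
exists i => //; split; last exact: ub.
apply: le_anti; rewrite ub // andbT.
apply: (@le_trans _ _ ((bdata P S lam yb w i0 + lppP (P w) lam i0 i y)%:E
   + (lpp (P w) (lam + y, i) (lam + x, 1%N))%:E)%E).
  rewrite -EFinD lee_fin Seq; move: Hle; rewrite /lppP; lra.
apply: leeD2r; apply: ereal_sup_ubound; exists i0 => //.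
Qed.
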